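(* For a word $w=w_1\cdots w_n$ over $\{1,2,3\}$ let $s(w)=|\{i : 1\le i\le n-2,\ w_{i+2}-w_i=2\}|$. Then for all $n\ge 0$ and $s\ge 0$, the number of words $w\in\{1,2,3\}^{2n}$ with $s(w)=s$ equals $$\sum_{r=0}^{n}\sum_{m=0}^{r}(-1)^{m+r+s}\binom{m+r}{2m}\binom{n-m}{s}9^{m},$$ and the number of words $w\in\{1,2,3\}^{2n+1}$ with $s(w)=s$ equals $$\sum_{r=0}^{n}\sum_{m=0}^{r}(-1)^{m+r+s}\binom{m+r+1}{2m+1}\binom{n-m}{s}3^{2m+1}.$$ *)

(* Defs.v *)
From mathcomp Require Import all_boot all_order all_algebra.
Set Implicit Arguments. Unset Strict Implicit. Unset Printing Implicit Defensive.
Import GRing.Theory Num.Theory.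
Local Open Scope ring_scope.

(* A word over {1,2,3} of length L is an L.-tuple of naturals-in-{1,2,3},
   represented as 'I_3 with letter k denoting k+1. *)
Definition letter (k : 'I_3) : int := ((val k).+1)%:Z.

(* w_j (1-based in the paper) is letter (tnth w j') with j' = j-1. *)
Definition wletter (L : nat) (w : L.-tuple 'I_3) (i : nat) : int :=
  letter (nth ord0 w i).

(* s(w) = #{ i : 1 <= i <= L-2, w_{i+2} - w_i = 2 }; with 0-based index
   i ranging over 0 <= i < L - 2. *)
Definition sstat (L : nat) (w : L.-tuple 'I_3) : nat :=
  #|[set i : 'I_L | (i + 2 < L)%N && (wletter w (i + 2) - wletter w i == 2%:Z)]|.

Definition count_s (L s : nat) : nat :=
  #|[set w : L.-tuple 'I_3 | sstat w == s]|.

(* Main.v *)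
Require Import Defs.
From mathcomp Require Import all_boot all_order all_algebra ring zify.
Import GRing.Theory Num.Theory.
Local Open Scope ring_scope.

Lemma letter_diff (x y : 'I_3) :
  (letter y - letter x == 2%:Z) = ((val x == 0%N) && (val y == 2%N)).
Proof.
by case: x => [[|[|[|?]]] hx] //; case: y => [[|[|[|?]]] hy].
Qed.

Lemma sstat_cons L (x : 'I_3) (w : L.-tuple 'I_3) :
  sstat [tuple of x :: w] = (((val x == 0%N) && (val (nth ord0 w 1) == 2%N)) + sstat w)%N.
Proof.
rewrite /sstat -!sum1_card big_mkcond [in RHS]big_mkcond /=.
rewrite big_ord_recl /=.
congr (_ + _)%N.
  rewrite inE /= /wletter /= letter_diff.
  case: (val x == 0%N) => /=; last by rewrite andbF.
  rewrite add0n ltnS; case: leqP => hL; last by case: (val (nth ord0 w 1) == 2%N).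
  by rewrite nth_default ?size_tuple.
apply: eq_bigr => i _; rewrite !inE /bump /= /wletter /=.
rewrite /bump leq0n add1n !add0n addSn ltnS.
done.
Qed.

Lemma sum_tuple_cons L (F : L.+1.-tuple 'I_3 -> {poly int}) :
  \sum_(w : L.+1.-tuple 'I_3) F w =
  \sum_(x : 'I_3) \sum_(w : L.-tuple 'I_3) F [tuple of x :: w].
Proof.
rewrite pair_bigA /=.
rewrite (reindex (fun p : 'I_3 * L.-tuple 'I_3 => [tuple of p.1 :: p.2])) //=.
exists (fun t : L.+1.-tuple 'I_3 => (thead t, behead_tuple t)).
  move=> [a t] _; congr (_, _).
  by apply: val_inj.
by move=> t _; rewrite [RHS]tuple_eta.
Qed.

Fixpoint Y (k : nat) : {poly int} * {poly int} :=
  if k is k'.+1 then ((Y k').1 + (Y k').2, (Y k').2 *+ 2 + (1 + 'X) * (Y k').1)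
  else (0, 1).
Definition Yc (b : bool) k := if b then (Y k).1 else (Y k).2.

Definition V L (a b : bool) : {poly int} :=
  \sum_(w : L.-tuple 'I_3 | ((val (nth ord0 w 0) == 2%N) == a) &&
                            ((val (nth ord0 w 1) == 2%N) == b)) 'X^(sstat w).

Lemma V_rec L c a : V L.+1 c a =
  if c then V L a false + V L a true
  else V L a false *+ 2 + (1 + 'X) * V L a true.
Proof.
rewrite /V big_mkcond sum_tuple_cons /=.
rewrite !big_ord_recl big_ord0 addr0 /=.
rewrite !(big_mkcond (fun w => _ && _)).
case: c; rewrite ?mulr_sumr -?sumrMnl -!big_split /=; apply: eq_bigr => w _;
  rewrite !sstat_cons /=;
  case: (val (nth ord0 w 0) == 2%N); case: (val (nth ord0 w 1) == 2%N);
  case: a => /=; rewrite ?addr0 ?add0r ?mulr0 ?mulrDl ?mul1r ?exprS //;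
  rewrite ?add0n ?mul0rn ?add0r ?addr0 ?mulr2n //; by rewrite addrC.
Qed.

Lemma sstat0 : sstat [tuple] = 0%N.
Proof. by apply: eq_card0 => -[]. Qed.

Lemma V_closed L a b : V L a b = Yc a (uphalf L) * Yc b L./2.
Proof.
elim: L a b => [|L IH] a b.
  rewrite /V big_mkcond (eq_bigr (fun _ => if ~~ a && ~~ b then 1 else 0)).
    by rewrite sumr_const card_tuple card_ord expn0; case: a; case: b;
      rewrite /Yc /= ?mulr1 ?mul0r ?mulr0.
  move=> w _; rewrite (tuple0 w) /= sstat0.
  by case: a; case: b.
rewrite V_rec !IH /=.
case: a; case: b => /=; rewrite /Yc /=.
all: ring.
Qed.

Definition xp : {poly int} := 1 - 'X.

Fixpoint U (k : nat) : {poly int} :=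
  match k with
  | 0 => 0
  | 1 => 1
  | (k'.+1 as k1).+1 => 3%:R * U k1 - xp * U k'
  end.

Lemma U_SS k : U k.+2 = 3%:R * U k.+1 - xp * U k.
Proof. by []. Qed.
Arguments U : simpl never.

Lemma U_add a b : U a.+1 * U b.+1 - xp * U a * U b = U (a + b).+1.
Proof.
suff H : forall b, (U a.+1 * U b.+1 - xp * U a * U b = U (a + b).+1) /\
               (U a.+1 * U b.+2 - xp * U a * U b.+1 = U (a + b.+1).+1) by case: (H b).
elim=> [|c [IH1 IH2]].
  have U0 : U 0 = 0 by [].
  have U1 : U 1 = 1 by [].
  split; first by rewrite addn0 U1 U0 mulr1 mulr0 subr0.
  rewrite addn1 (U_SS a) (U_SS 0) U1 U0; ring.
split=> //.
have -> : U (a + c.+2).+1 = 3%:R * U (a + c.+1).+1 - xp * U (a + c).+1.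
  by rewrite !addnS U_SS.
rewrite -IH1 -IH2 (U_SS c.+1) (U_SS c); ring.
Qed.

Lemma U_sq n : U n.+1 * U n.+1 = \sum_(k < n.+1) xp ^+ (n - k) * U k.*2.+1.
Proof.
elim: n => [|n IH].
  by rewrite big_ord1 /= expr0 mul1r.
rewrite big_ord_recr /= subnn expr0 mul1r.
have H := U_add n.+1 n.+1.
rewrite addnn in H.
rewrite -H -mulrA IH mulr_sumr.
rewrite [X in _ = X + _](_ : _ = \sum_(k < n.+1) xp * (xp ^+ (n - k) * U k.*2.+1)).
  by rewrite addrC subrK.
apply: eq_bigr => k _.
by rewrite mulrA -exprS subSn // -ltnS.
Qed.

Lemma U_prod n : U n.+1 * U n.+2 = \sum_(k < n.+1) xp ^+ (n - k) * U k.*2.+2.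
Proof.
elim: n => [|n IH].
  by rewrite big_ord1 /= expr0 mul1r.
rewrite big_ord_recr /= subnn expr0 mul1r.
have H := U_add n.+1 n.+2.
rewrite addnS addnn in H.
rewrite -H -mulrA IH mulr_sumr.
rewrite [X in _ = X + _](_ : _ = \sum_(k < n.+1) xp * (xp ^+ (n - k) * U k.*2.+2)).
  by rewrite addrC subrK.
apply: eq_bigr => k _.
by rewrite mulrA -exprS subSn // -ltnS.
Qed.


Definition term j i : {poly int} := ('C(j - i, i) * 3 ^ (j - i.*2))%:R * (- xp) ^+ i.
Definition W j := \sum_(i < j.+1) term j i.

Lemma term0 j i : (j < i.*2)%N -> term j i = 0.
Proof. by rewrite -mul2n => h; rewrite /term bin_small ?mul0n ?mul0r //; lia. Qed.

Lemma nat_id j i :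
  ('C(j.+1 - i, i.+1) * 3 ^ (j - i.*2) =
   3 * ('C(j - i, i.+1) * 3 ^ (j.+1 - i.+1.*2)) + 'C(j - i, i) * 3 ^ (j - i.*2))%N.
Proof.
rewrite -!mul2n.
case: (leqP (2 * i) j) => h.
  rewrite subSn; last by lia.
  rewrite binS mulnDl; congr (_ + _)%N.
  case: (ltngtP (2 * i) j) => h2; last 1 first.
  - by rewrite bin_small ?mul0n ?muln0 //; lia.
  - rewrite mulnCA -expnS; congr (_ * 3 ^ _)%N; lia.
  - by lia.
rewrite !bin_small //; lia.
Qed.

Lemma W_rec j : W j.+2 = 3%:R * W j.+1 - xp * W j.
Proof.
have E1 : \sum_(i < j.+1) term j.+1 (bump 0 i) = \sum_(i < j.+2) term j.+1 (bump 0 i).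
  by rewrite [RHS]big_ord_recr /= term0 ?addr0 // /bump /=; rewrite -mul2n; lia.
have E2 : \sum_(i < j.+1) term j i = \sum_(i < j.+2) term j i.
  by rewrite [RHS]big_ord_recr /= term0 ?addr0 // -mul2n; lia.
rewrite /W big_ord_recl [in X in _ = 3%:R * X - _]big_ord_recl E1 E2.
rewrite mulrDr mulr_sumr mulr_sumr -addrA -sumrN -big_split /=.
congr (_ + _).
  by rewrite /term !subn0 !bin0 !mul1n !expr0 !mulr1 -natrM -expnS.
apply: eq_bigr => i _.
rewrite /term /bump /= !add1n.
have -> : (j.+2 - i.+1 = j.+1 - i)%N by [].
have -> : (j.+2 - i.+1.*2 = j - i.*2)%N by rewrite doubleS.
have -> : (j.+1 - i.+1 = j - i)%N by [].
rewrite nat_id natrD !natrM exprS.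
ring.
Qed.

Lemma U_W j : U j.+1 = W j.
Proof.
suff H : forall j, U j.+1 = W j /\ U j.+2 = W j.+1 by case: (H j).
elim=> [|k [IH1 IH2]].
  split; first by rewrite /W big_ord1 /term /= expr0 mulr1.
  rewrite /W !big_ord_recl big_ord0 /term /= addr0.
  rewrite !expr0 mulr1 U_SS (_ : U 1 = 1) // (_ : U 0 = 0) // /bump /=.
  by rewrite mulr1 mulr0 subr0 bin0 bin_small // !mul0n mul0r addr0.
by split=> //; rewrite U_SS W_rec IH1 IH2.
Qed.

Lemma W_even k :
  W k.*2 = \sum_(m < k.+1) ('C(m + k, 2 * m) * 9 ^ m)%:R * (- xp) ^+ (k - m).
Proof.
rewrite /W (_ : k.*2.+1 = k.+1 + k)%N; last by rewrite -addnn addSn.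
rewrite big_split_ord /= [X in _ + X]big1 ?addr0; last first.
  move=> i _; apply: term0 => /=; rewrite -mul2n; lia.
rewrite (reindex_inj rev_ord_inj); apply: eq_bigr => m _ /=.
have hm : (m < k.+1)%N by [].
rewrite /term subSS.
have -> : (k.*2 - (k - m) = m + k)%N by rewrite -mul2n; lia.
have -> : (k.*2 - (k - m).*2 = 2 * m)%N by rewrite -!mul2n; lia.
rewrite expnM.
have -> : (k - m = (m + k) - 2 * m)%N by lia.
by rewrite bin_sub //; lia.
Qed.

Lemma W_odd k :
  W k.*2.+1 = \sum_(m < k.+1) ('C(m + k + 1, 2 * m + 1) * 3 ^ (2 * m + 1))%:R * (- xp) ^+ (k - m).
Proof.
rewrite /W (_ : k.*2.+2 = k.+1 + k.+1)%N; last by rewrite -addnn addSn addnS.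
rewrite big_split_ord /= [X in _ + X]big1 ?addr0; last first.
  move=> i _; apply: term0 => /=; rewrite -mul2n; lia.
rewrite (reindex_inj rev_ord_inj); apply: eq_bigr => m _ /=.
have hm : (m < k.+1)%N by [].
rewrite /term subSS.
have -> : (k.*2.+1 - (k - m) = m + k + 1)%N by rewrite -mul2n; lia.
have -> : (k.*2.+1 - (k - m).*2 = 2 * m + 1)%N by rewrite -!mul2n; lia.
have -> : (k - m = (m + k + 1) - (2 * m + 1))%N by lia.
rewrite bin_sub //; lia.
Qed.

Lemma coef_xp N s : (xp ^+ N)`_s = (-1) ^+ s * ('C(N, s))%:R.
Proof.
elim: N s => [|N IH] s.
  by rewrite expr0 coef1; case: s => [|s] //=; rewrite mulr0.
rewrite exprS /xp mulrBl mul1r coefB coefXM IH.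
case: s => [|s] /=; first by rewrite subr0 !bin0.
rewrite IH binS natrD mulrDr exprS; ring.
Qed.

Lemma term_scale (n k m : nat) (c : nat) : (m <= k)%N -> (k <= n)%N ->
  xp ^+ (n - k) * ((c%:R : {poly int}) * (- xp) ^+ (k - m)) =
  ((-1) ^+ (k - m) * c%:R : int) *: xp ^+ (n - m).
Proof.
move=> hmk hkn.
have -> : (n - m = (n - k) + (k - m))%N by lia.
rewrite exprD -mul_polyC rmorphM /= rmorphXn /= polyCN polyC1 polyC_natr exprNn.
ring.
Qed.

Definition Tt k := (Y k).1 + (Y k).2.

Lemma Y_U k : (Y k).1 = U k /\ Tt k = U k.+1.
Proof.
elim: k => [|k [IH1 IH2]].
  by split; [|rewrite /Tt /= add0r].
have E1 : (Y k.+1).1 = U k.+1 by rewrite -IH2.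
split=> //.
rewrite /Tt /= U_SS -IH2 -IH1 /Tt /xp; ring.
Qed.

Lemma G_closed L :
  \sum_(w : L.-tuple 'I_3) 'X^(sstat w) = U (uphalf L).+1 * U L./2.+1.
Proof.
have -> : \sum_(w : L.-tuple 'I_3) 'X^(sstat w) =
   V L false false + V L false true + V L true false + V L true true.
  rewrite /V !(big_mkcond (fun w => _ && _)) -!big_split /=.
  apply: eq_bigr => w _.
  by case: (val (nth ord0 w 0) == 2%N); case: (val (nth ord0 w 1) == 2%N);
    rewrite /= ?addr0 ?add0r.
rewrite !V_closed /Yc.
have [_ <-] := Y_U (uphalf L).
have [_ <-] := Y_U L./2.
rewrite /Tt; ring.
Qed.

Lemma count_coef L s :
  (count_s L s)%:Z = (\sum_(w : L.-tuple 'I_3) 'X^(sstat w))`_s.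
Proof.
rewrite coef_sum (eq_bigr (fun w => ((sstat w == s) : nat)%:R)); last first.
  by move=> w _; rewrite coefXn eq_sym.
rewrite -natz -natr_sum /count_s -sum1_card big_mkcond /=.
congr (_%:R); apply: eq_bigr => w _; rewrite inE; by case: (_ == _).
Qed.

Theorem mainTheorem4 (n s : nat) :
  (count_s (2 * n) s)%:Z =
    \sum_(0 <= r < n.+1) \sum_(0 <= m < r.+1)
      (-1) ^+ (m + r + s) * ('C(m + r, 2 * m) * 'C(n - m, s) * 9 ^ m)%:Z
  /\
  (count_s (2 * n).+1 s)%:Z =
    \sum_(0 <= r < n.+1) \sum_(0 <= m < r.+1)
      (-1) ^+ (m + r + s) * ('C(m + r + 1, 2 * m + 1) * 'C(n - m, s) * 3 ^ (2 * m + 1))%:Z.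
Proof.
split.
- rewrite count_coef G_closed mul2n uphalf_double doubleK U_sq coef_sum big_mkord.
  apply: eq_bigr => k _.
  rewrite U_W W_even mulr_sumr coef_sum big_mkord; apply: eq_bigr => m _.
  have hm : (m <= k)%N by rewrite -ltnS.
  have hk : (k <= n)%N by rewrite -ltnS.
  rewrite term_scale // coefZ coef_xp.
  have -> : (m + k + s = (k - m) + s + 2 * m)%N by lia.
  have sq : forall e : nat, (-1) ^+ e * (-1) ^+ e = 1 :> int.
    by move=> e; rewrite -exprD addnn -mul2n exprM expr2 mulrNN mulr1 expr1n.
  rewrite !exprD expr0 mulr1 sq mulr1 -!natz !natrM; ring.
- rewrite count_coef G_closed mul2n.
  have -> : uphalf (n.*2).+1 = n.+1 by rewrite uphalfE /= doubleK.
  have -> : (n.*2).+1./2 = n by rewrite /= uphalf_double.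
  rewrite mulrC U_prod coef_sum big_mkord.
  apply: eq_bigr => k _.
  rewrite U_W W_odd mulr_sumr coef_sum big_mkord; apply: eq_bigr => m _.
  have hm : (m <= k)%N by rewrite -ltnS.
  have hk : (k <= n)%N by rewrite -ltnS.
  rewrite term_scale // coefZ coef_xp.
  have -> : (m + k + s = (k - m) + s + 2 * m)%N by lia.
  have sq : forall e : nat, (-1) ^+ e * (-1) ^+ e = 1 :> int.
    by move=> e; rewrite -exprD addnn -mul2n exprM expr2 mulrNN mulr1 expr1n.
  rewrite !exprD expr0 mulr1 sq mulr1 -!natz !natrM; ring.
Qed.
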